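(* Let $C$ be a square in the plane. For a point $p\in C$, let $D_p$ be the set of points of the plane that are closer to $p$ than to any point of the boundary $\partial C$, and let $f(p)=\operatorname{area}(D_p)/\operatorname{area}(C)$. If $p$ is a point chosen uniformly at random from $C$, then $\Pr[f(p)\ge 1/15]\ge 1/15$.
   Context: Distances are Euclidean. *)

(* Defs.v *)
From HB Require Import structures.
From mathcomp Require Import all_boot all_order all_algebra.
From mathcomp Require Import all_classical all_reals all_analysis.
Set Implicit Arguments. Unset Strict Implicit. Unset Printing Implicit Defensive.
Import Order.TTheory GRing.Theory Num.Theory.
Import numFieldNormedType.Exports.
Local Open Scope classical_set_scope.
Local Open Scope ring_scope.

Section Defs.
Variable R : realType.

(* A square in the plane R^2 = R*R: center c, half side-length h > 0,
   rotation angle t; local coordinates (a,b) with |a|,|b| <= h. *)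
Definition sqpt (c : R * R) (t a b : R) : R * R :=
  (c.1 + a * cos t - b * sin t, c.2 + a * sin t + b * cos t).

Definition square (c : R * R) (h t : R) : set (R * R) :=
  [set x | exists a b, `|a| <= h /\ `|b| <= h /\ x = sqpt c t a b].

Definition square_bd (c : R * R) (h t : R) : set (R * R) :=
  [set x | exists a b, Num.max `|a| `|b| = h /\ x = sqpt c t a b].

Definition edist (x y : R * R) : R :=
  Num.sqrt ((x.1 - y.1) ^+ 2 + (x.2 - y.2) ^+ 2).

Definition Dreg (c : R * R) (h t : R) (p : R * R) : set (R * R) :=
  [set x | forall q, square_bd c h t q -> edist x p < edist x q].

Definition area (A : set (R * R)) : \bar R :=
  ((@lebesgue_measure R) \x (@lebesgue_measure R))%E A.

Definition fratio (c : R * R) (h t : R) (p : R * R) : \bar R :=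
  (area (Dreg c h t p) * (area (square c h t))^-1)%E.

End Defs.

(* Main.v *)
Require Import Defs.
From HB Require Import structures.
From mathcomp Require Import all_boot all_order all_algebra.
From mathcomp Require Import all_classical all_reals all_analysis.
From mathcomp Require Import ring lra.
Import Order.TTheory GRing.Theory Num.Theory.
Local Open Scope classical_set_scope.
Local Open Scope ring_scope.
Section S.
Variable R : realType.
Local Open Scope ereal_scope.

Lemma leb_mono (A B : set R) : A `<=` B -> (@lebesgue_measure R) A <= lebesgue_measure B.
Proof.
move=> AB. rewrite /lebesgue_measure /lebesgue_stieltjes_measure /measure_extension.
exact: le_outer_measure.
Qed.

Lemma int_mono d (T : measurableType d) (mu : {measure set T -> \bar R}) (f g : T -> \bar R) :
  (forall x, 0 <= f x) -> (forall x, f x <= g x) ->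
  \int[mu]_x f x <= \int[mu]_x g x.
Proof.
move=> f0 fg.
have g0 : forall x, 0 <= g x by move=> x; exact: le_trans (f0 x) (fg x).
rewrite /integral !patch_setT.
have -> : f^\- = cst 0 by apply/funext => x; apply: (ge0_funenegE (D:=setT)) => //; rewrite inE.
have -> : g^\- = cst 0 by apply/funext => x; apply: (ge0_funenegE (D:=setT)) => //; rewrite inE.
have -> : f^\+ = f by apply/funext => x; apply: (ge0_funeposE (D:=setT)) => //; rewrite inE.
have -> : g^\+ = g by apply/funext => x; apply: (ge0_funeposE (D:=setT)) => //; rewrite inE.
apply: leeB => //.
apply: ereal_sup_le => _ [h /= hf <-]; exists h => //= x.
exact: le_trans (hf x) (fg x).
Qed.

Lemma area_mono (A B : set (R * R)) : A `<=` B -> area A <= area B.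
Proof.
move=> AB; rewrite /area /product_measure1.
apply: int_mono => x; first exact: measure_ge0.
apply: leb_mono => y; rewrite /xsection /= !inE; exact: AB.
Qed.
End S.

Section S2.
Variable R : realType.

Definition uu (c : R * R) (t : R) (x : R * R) := (x.1 - c.1) * cos t + (x.2 - c.2) * sin t.
Definition ww (c : R * R) (t : R) (x : R * R) := (x.2 - c.2) * cos t - (x.1 - c.1) * sin t.

Lemma squareE c h t : square c h t = [set x | `|uu c t x| <= h /\ `|ww c t x| <= h].
Proof.
have cs : cos t ^+ 2 + sin t ^+ 2 = 1 :> R by exact: cos2Dsin2.
apply/seteqP; split => x.
  move=> [a [b [ha [hb ->]]]]; rewrite /uu /ww /sqpt /=.
  have -> : (c.1 + a * cos t - b * sin t - c.1) * cos t + (c.2 + a * sin t + b * cos t - c.2) * sin t = a.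
    by rewrite -[RHS]mulr1 -cs; ring.
  have -> : (c.2 + a * sin t + b * cos t - c.2) * cos t - (c.1 + a * cos t - b * sin t - c.1) * sin t = b.
    by rewrite -[RHS]mulr1 -cs; ring.
  by [].
move=> [hu hw]; exists (uu c t x), (ww c t x); do 2 split => //.
rewrite /sqpt /uu /ww; case: x {hu hw} => x1 x2 /=; congr (_, _).
  transitivity (c.1 + (x1 - c.1) * (cos t ^+ 2 + sin t ^+ 2)); last by ring.
  by rewrite cs mulr1; ring.
transitivity (c.2 + (x2 - c.2) * (cos t ^+ 2 + sin t ^+ 2)); last by ring.
by rewrite cs mulr1; ring.
Qed.

Lemma measurable_uu c t : measurable_fun setT (uu c t).
Proof.
rewrite /uu; apply: measurable_realfun.measurable_funD; apply: measurable_realfun.measurable_funM => //;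
  apply: measurable_realfun.measurable_funB => //; first [exact: measurable_snd | exact: measurable_fst].
Qed.

Lemma measurable_ww c t : measurable_fun setT (ww c t).
Proof.
rewrite /ww; apply: measurable_realfun.measurable_funB; apply: measurable_realfun.measurable_funM => //;
  apply: measurable_realfun.measurable_funB => //; first [exact: measurable_snd | exact: measurable_fst].
Qed.

Lemma measurable_square c h t : measurable (square c h t : set (measurableTypeR R * measurableTypeR R)).
Proof.
rewrite squareE.
have -> : [set x : R * R | `|uu c t x| <= h /\ `|ww c t x| <= h] =
  (uu c t @^-1` `[-h, h]) `&` (ww c t @^-1` `[-h, h]).
  by apply/seteqP; split => x /=; rewrite !in_itv /= -!ler_norml.
apply: measurableI.
  by rewrite -[X in measurable X]setTI; apply: measurable_uu.
by rewrite -[X in measurable X]setTI; apply: measurable_ww.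
Qed.
End S2.

Section Aff.
Variable R : realType.
Local Notation mu := (@lebesgue_measure R).
Variables (k p q : R).
Definition gaff (y : R) : R := (y - p) / k + q.

Lemma mes_aff : measurable_fun setT gaff.
Proof.
apply: measurable_realfun.measurable_funD => //; apply: measurable_realfun.measurable_funM => //.
by apply: measurable_realfun.measurable_funB.
Qed.

Local Open Scope ereal_scope.
Definition affm (A : set (measurableTypeR R)) : \bar R := (`|k|^-1)%:E * mu (gaff @^-1` A).

Let affm0 : affm set0 = 0.
Proof. by rewrite /affm preimage_set0 measure0 mule0. Qed.

Let affm_ge0 A : 0 <= affm A.
Proof.
by rewrite /affm mule_ge0 // lee_fin invr_ge0.
Qed.

Let affm_sigma_additive : semi_sigma_additive affm.
Proof.
move=> F mF tF mUF; rewrite /affm preimage_bigcup.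
rewrite [X in X @ \oo --> _](_ : _ =
    (fun n => (`|k|^-1)%:E * \sum_(0 <= i < n) mu (gaff @^-1` F i))); last first.
  by apply/funext => n; rewrite ge0_sume_distrr.
apply: cvgeZl => //.
apply: measure_semi_sigma_additive => //.
- move=> n; rewrite -[X in measurable X]setTI; have mFn : measurable (F n : set R) := mF n.
  have := mes_aff measurableT _ mFn. exact.
- apply/trivIsetP => /= i j _ _ ij; rewrite -preimage_setI.
  by move/trivIsetP : tF => /(_ _ _ _ _ ij) ->//; rewrite preimage_set0.
- rewrite -preimage_bigcup -[X in measurable X]setTI; have mU : measurable (\bigcup_n F n : set R) := mUF.
  have := mes_aff measurableT _ mU. exact.
Qed.

HB.instance Definition _ := isMeasure.Build _ _ _ affm affm0 affm_ge0 affm_sigma_additive.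
End Aff.
Arguments gaff {R}.
Arguments affm {R}.

Section Aff2.
Variable R : realType.
Local Notation mu := (@lebesgue_measure R).

Lemma gaff_itv (k p q a b : R) : 0 < k ->
  gaff k p q @^-1` `]a, b]%classic = `]p + k * (a - q), p + k * (b - q)]%classic.
Proof.
move=> k0; apply/seteqP; split => y /=; rewrite !in_itv /= /gaff;
have ey : y = p + k * ((y - p) / k) by field; rewrite gt_eqF.
  rewrite [in X in _ -> X]ey.
  move: ((y - p) / k) => z.
  by move=> /andP[h1 h2]; apply/andP; rewrite ltrD2l lerD2l ltr_pM2l // ler_pM2l //; split; lra.
rewrite [in X in X -> _]ey.
move: ((y - p) / k) => z.
by move=> /andP[h1 h2]; move: h1 h2; rewrite ltrD2l lerD2l ltr_pM2l // ler_pM2l // => h1 h2; apply/andP; split; lra.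
Qed.

Lemma leb_affine (k p q : R) (A : set R) : 0 < k -> measurable A ->
  mu (gaff k p q @^-1` A) = (k%:E * mu A)%E.
Proof.
move=> k0 mA.
rewrite (@lebesgue_measure_unique R (affm k p q) _ A mA) /affm.
  by rewrite muleA -EFinM gtr0_norm // mulfV ?gt_eqF // mul1e.
move=> _ [[a b] _ <-] /=.
rewrite /affm gaff_itv // !lebesgue_measure_itv /= !lte_fin gtr0_norm //.
rewrite ltrD2l ltr_pM2l // ltrD2r.
case: ifP => ab; last by rewrite mule0.
rewrite -!EFinB -EFinM; congr (_%:E).
by field; rewrite gt_eqF.
Qed.
End Aff2.

Section Aff3.
Variable R : realType.
Local Notation mu := (@lebesgue_measure R).
Local Notation T2 := (measurableTypeR R * measurableTypeR R)%type.
Variables (k : R) (v c : R * R).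

Lemma mes_aff' p q : measurable_fun (T:=measurableTypeR R) (U:=measurableTypeR R) setT (gaff k p q).
Proof. move=> _ Y mY; have mY' : measurable (Y : set R) := mY. exact: (mes_aff R k p q measurableT _ mY'). Qed.

Definition psi (y : T2) : T2 := (gaff k v.1 c.1 y.1, gaff k v.2 c.2 y.2).

Lemma mes_psi : measurable_fun setT psi.
Proof.
apply: measurable_fun_pair.
  exact: (measurableT_comp (mes_aff' _ _) measurable_fst).
exact: (measurableT_comp (mes_aff' _ _) measurable_snd).
Qed.

Local Open Scope ereal_scope.
Definition affm2 (A : set T2) : \bar R := (`|k| ^- 2)%:E * area (psi @^-1` A).

Let affm20 : affm2 set0 = 0.
Proof. by rewrite /affm2 preimage_set0 /area measure0 mule0. Qed.

Let affm2_ge0 A : 0 <= affm2 A.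
Proof. by rewrite /affm2 mule_ge0 // ?lee_fin ?invr_ge0 ?exprn_ge0 //; apply: measure_ge0. Qed.

Let affm2_sigma_additive : semi_sigma_additive affm2.
Proof.
move=> F mF tF mUF; rewrite /affm2 preimage_bigcup.
rewrite [X in X @ \oo --> _](_ : _ =
    (fun n => (`|k| ^- 2)%:E * \sum_(0 <= i < n) area (psi @^-1` F i))); last first.
  by apply/funext => n; rewrite ge0_sume_distrr // => i _; apply: measure_ge0.
apply: cvgeZl => //.
have := @measure_semi_sigma_additive _ _ _ (mu \x mu)%E (fun n => psi @^-1` F n); apply.
- by move=> n; rewrite -[X in measurable X]setTI; apply: mes_psi.
- apply/trivIsetP => /= i j _ _ ij; rewrite -preimage_setI.
  by move/trivIsetP : tF => /(_ _ _ _ _ ij) ->//; rewrite preimage_set0.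
- by rewrite -preimage_bigcup -[X in measurable X]setTI; apply: mes_psi.
Qed.

HB.instance Definition _ := isMeasure.Build _ _ _ affm2 affm20 affm2_ge0 affm2_sigma_additive.
End Aff3.
Arguments psi {R}.
Arguments affm2 {R}.

Section Aff4.
Variable R : realType.
Local Notation mu := (@lebesgue_measure R).
Local Notation T2 := (measurableTypeR R * measurableTypeR R)%type.

Lemma area_aff (k : R) (v c : R * R) (X : set T2) : 0 < k -> measurable X ->
  area (psi k v c @^-1` X) = ((k ^+ 2)%:E * area X)%E.
Proof.
move=> k0 mX.
have := @product_measure_unique _ _ _ _ R mu mu (affm2 k v c) _ X mX.
rewrite /area => ->.
  by rewrite /affm2 muleA -EFinM gtr0_norm // mulfV ?mul1e // expf_neq0 // gt_eqF.
move=> A B mA mB; rewrite /affm2.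
change (((`|k| ^- 2)%:E * (mu \x mu)%E (psi k v c @^-1` (A `*` B)))%E = (mu A * mu B)%E).
rewrite [psi k v c @^-1` _](_ : _ = (gaff k v.1 c.1 @^-1` A) `*` (gaff k v.2 c.2 @^-1` B)) //.
rewrite product_measure1E; last 2 first.
- by rewrite -[X in measurable X]setTI; apply: mes_aff'.
- by rewrite -[X in measurable X]setTI; apply: mes_aff'.
change (((`|k| ^- 2)%:E * (mu (gaff k v.1 c.1 @^-1` A) * mu (gaff k v.2 c.2 @^-1` B)))%E = (mu A * mu B)%E).
rewrite !leb_affine // gtr0_norm //.
rewrite [X in (_ * X)%E]muleACA.
have e : (k%:E * k%:E = (k ^+ 2)%:E :> \bar R)%E by rewrite expr2.
rewrite e (muleA (k ^- 2)%:E) -EFinM mulVf ?mul1e //.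
by rewrite expf_neq0 // gt_eqF.
Qed.
End Aff4.

Section G.
Variable R : realType.

Lemma key_ineq (h pa pb a1 b1 qa qb : R) : 0 < h ->
  `|pa| <= 4 / 15 * h -> `|pb| <= 4 / 15 * h ->
  `|a1 - pa| <= 4 / 15 * h -> `|b1 - pb| <= 4 / 15 * h ->
  Num.max `|qa| `|qb| = h ->
  (a1 - pa) ^+ 2 + (b1 - pb) ^+ 2 < (a1 - qa) ^+ 2 + (b1 - qb) ^+ 2.
Proof.
move=> h0; rewrite !ler_norml => /andP[pa1 pa2] /andP[pb1 pb2] /andP[d1 d2] /andP[e1 e2] hm.
have Ha : (a1 - pa) ^+ 2 <= (4 / 15 * h) ^+ 2 by nra.
have Hb : (b1 - pb) ^+ 2 <= (4 / 15 * h) ^+ 2 by nra.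
have [qah | qbh] : `|qa| = h \/ `|qb| = h.
  by move: hm; case: (leP `|qa| `|qb|) => _ ->; [right|left].
- have : (a1 - qa) ^+ 2 >= (7 / 15 * h) ^+ 2.
    case: (ger0P qa) qah => _ qah.
      by rewrite -qah in h0 pa1 pa2 d1 d2 *; nra.
    have qe : qa = - h by rewrite -qah opprK.
    rewrite qe; nra.
  have : 0 <= (b1 - qb) ^+ 2 by apply: sqr_ge0.
  nra.
- have : (b1 - qb) ^+ 2 >= (7 / 15 * h) ^+ 2.
    case: (ger0P qb) qbh => _ qbh.
      by rewrite -qbh in h0 pb1 pb2 e1 e2 *; nra.
    have qe : qb = - h by rewrite -qbh opprK.
    rewrite qe; nra.
  have : 0 <= (a1 - qa) ^+ 2 by apply: sqr_ge0.
  nra.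
Qed.
End G.



Section B.
Variable R : realType.
Local Notation mu := (@lebesgue_measure R).

Definition box (c : R * R) (r : R) : set (R * R) :=
  `[c.1 - r, c.1 + r]%classic `*` `[c.2 - r, c.2 + r]%classic.

Lemma area_box c r : 0 <= r -> area (box c r) = ((2 * r) ^+ 2)%:E.
Proof.
move=> r0; rewrite /area /box product_measure1E; try exact: measurable_itv.
change ((mu [set` (`[(c.1 - r)%R, (c.1 + r)%R] : interval R)] * mu [set` (`[(c.2 - r)%R, (c.2 + r)%R] : interval R)])%E = ((2 * r) ^+ 2)%:E).
rewrite !lebesgue_measure_itv /= !lte_fin.
have h1 : c.1 - r <= c.1 + r by lra.
have h2 : c.2 - r <= c.2 + r by lra.
case: ltP => H1; case: ltP => H2.
- by rewrite -!EFinB -EFinM; congr (_%:E); ring.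
- have -> : r = 0 by lra. by rewrite mule0 mulr0 expr0n.
- have -> : r = 0 by lra. by rewrite mul0e mulr0 expr0n.
- have -> : r = 0 by lra. by rewrite mul0e mulr0 expr0n.
Qed.

Lemma box_sub_square c h t : 0 <= h -> box c (h / 2) `<=` square c h t.
Proof.
move=> h0 x [/= hx1 hx2]; rewrite squareE /=.
move: hx1 hx2; rewrite !in_itv /= => /andP[a1 a2] /andP[b1 b2].
have e1 : `|x.1 - c.1| <= h / 2 by rewrite ler_norml; apply/andP; split; lra.
have e2 : `|x.2 - c.2| <= h / 2 by rewrite ler_norml; apply/andP; split; lra.
have C1 := cos_max t; have S1 := sin_max t.
have p1 : `|(x.1 - c.1) * cos t| <= h / 2.
  rewrite normrM; rewrite -[X in _ <= X]mulr1; apply: ler_pM => //.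
have p2 : `|(x.2 - c.2) * sin t| <= h / 2.
  rewrite normrM; rewrite -[X in _ <= X]mulr1; apply: ler_pM => //.
have p3 : `|(x.1 - c.1) * sin t| <= h / 2.
  rewrite normrM; rewrite -[X in _ <= X]mulr1; apply: ler_pM => //.
have p4 : `|(x.2 - c.2) * cos t| <= h / 2.
  rewrite normrM; rewrite -[X in _ <= X]mulr1; apply: ler_pM => //.
rewrite /uu /ww; split.
  by apply: le_trans (ler_normD _ _) _; lra.
by apply: le_trans (ler_normB _ _) _; lra.
Qed.

Lemma square_sub_box c h t : 0 <= h -> square c h t `<=` box c (2 * h).
Proof.
move=> h0 x [a [b [ha [hb ->]]]]; rewrite /box /sqpt /=.
have C1 := cos_max t; have S1 := sin_max t.
have p1 : `|a * cos t| <= h by rewrite normrM -[X in _ <= X]mulr1; apply: ler_pM.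
have p2 : `|b * sin t| <= h by rewrite normrM -[X in _ <= X]mulr1; apply: ler_pM.
have p3 : `|a * sin t| <= h by rewrite normrM -[X in _ <= X]mulr1; apply: ler_pM.
have p4 : `|b * cos t| <= h by rewrite normrM -[X in _ <= X]mulr1; apply: ler_pM.
move: p1 p2 p3 p4; rewrite !ler_norml => /andP[? ?] /andP[? ?] /andP[? ?] /andP[? ?].
split; rewrite /= in_itv /=; apply/andP; split; lra.
Qed.
End B.

Arguments uu {R}.
Arguments ww {R}.
Section H.
Variable R : realType.

Lemma uu_sqpt (c : R * R) t a b : uu c t (sqpt c t a b) = a.
Proof.
have cs : cos t ^+ 2 + sin t ^+ 2 = 1 :> R by exact: cos2Dsin2.
by rewrite /uu /sqpt /= -[RHS]mulr1 -cs; ring.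
Qed.

Lemma ww_sqpt (c : R * R) t a b : ww c t (sqpt c t a b) = b.
Proof.
have cs : cos t ^+ 2 + sin t ^+ 2 = 1 :> R by exact: cos2Dsin2.
by rewrite /ww /sqpt /= -[RHS]mulr1 -cs; ring.
Qed.

Lemma uu_shift (c p x : R * R) t : uu p t x = uu c t x - uu c t p.
Proof. rewrite /uu; ring. Qed.

Lemma ww_shift (c p x : R * R) t : ww p t x = ww c t x - ww c t p.
Proof. rewrite /ww; ring. Qed.

Lemma dist_rot (c x y : R * R) t :
  (x.1 - y.1) ^+ 2 + (x.2 - y.2) ^+ 2 =
  (uu c t x - uu c t y) ^+ 2 + (ww c t x - ww c t y) ^+ 2.
Proof.
have cs : cos t ^+ 2 + sin t ^+ 2 = 1 :> R by exact: cos2Dsin2.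
transitivity (((x.1 - y.1) ^+ 2 + (x.2 - y.2) ^+ 2) * (cos t ^+ 2 + sin t ^+ 2)).
  by rewrite cs mulr1.
rewrite /uu /ww; ring.
Qed.

Lemma sq_hom (k : R) (v c : R * R) h t : 0 < k ->
  square v (k * h) t = (psi k v c @^-1` square c h t : set (R * R)).
Proof.
move=> k0; rewrite !squareE; apply/seteqP; split => y /=.
  have e1 : uu c t (psi k v c y) = uu v t y / k.
    by rewrite /uu /psi /gaff /=; field; rewrite gt_eqF.
  have e2 : ww c t (psi k v c y) = ww v t y / k.
    by rewrite /ww /psi /gaff /=; field; rewrite gt_eqF.
  have nk : `|k^-1| = k^-1 by rewrite gtr0_norm ?invr_gt0.
  rewrite e1 e2 !normrM nk => -[h1 h2].
  by split; rewrite ler_pdivrMr // mulrC.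
have e1 : uu c t (psi k v c y) = uu v t y / k.
  by rewrite /uu /psi /gaff /=; field; rewrite gt_eqF.
have e2 : ww c t (psi k v c y) = ww v t y / k.
  by rewrite /ww /psi /gaff /=; field; rewrite gt_eqF.
have nk : `|k^-1| = k^-1 by rewrite gtr0_norm ?invr_gt0.
  rewrite e1 e2 !normrM nk => -[h1 h2].
by split; [move: h1|move: h2]; rewrite ler_pdivrMr // mulrC.
Qed.

Lemma area_sq_hom (k : R) (v c : R * R) h t : 0 < k ->
  area (square v (k * h) t) = ((k ^+ 2)%:E * area (square c h t))%E.
Proof.
move=> k0; rewrite (sq_hom k v c h t k0).
exact: (@area_aff R k v c _ k0 (measurable_square R c h t)).
Qed.

Lemma D_contains (c p : R * R) h t : 0 < h ->
  square c (4 / 15 * h) t p -> square p (4 / 15 * h) t `<=` Dreg c h t p.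
Proof.
move=> h0; rewrite !squareE => -[hp1 hp2] x [hx1 hx2] q [a [b [hq ->]]].
rewrite (uu_shift c) in hx1; rewrite (ww_shift c) in hx2.
have key : (x.1 - p.1) ^+ 2 + (x.2 - p.2) ^+ 2 <
    (x.1 - (sqpt c t a b).1) ^+ 2 + (x.2 - (sqpt c t a b).2) ^+ 2.
  rewrite (dist_rot c _ _ t) (dist_rot c x _ t) uu_sqpt ww_sqpt.
  exact: (@key_ineq R h _ _ _ _ _ _ h0 hp1 hp2 hx1 hx2 hq).
unfold edist; rewrite ltr_sqrt; first exact: key.
apply: le_lt_trans key.
by rewrite addr_ge0 // sqr_ge0.
Qed.
End H.


Lemma areaC_pos (R : realType) (c : R * R) (h t : R) : 0 < h ->
  exists a : R, area (square c h t) = a%:E /\ 0 < a.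
Proof.
move=> h0.
have lo := @area_mono R _ _ (@box_sub_square R c h t (ltW h0)).
have hi := @area_mono R _ _ (@square_sub_box R c h t (ltW h0)).
have hh : 0 <= h / 2 by rewrite divr_ge0 // ltW.
rewrite (@area_box R c (h / 2) hh) in lo.
have hh2 : 0 <= 2 * h by rewrite mulr_ge0 // ltW.
rewrite (@area_box R c (2 * h) hh2) in hi.
have ge0 : (0 <= area (square c h t))%E by apply: le_trans _ lo; rewrite lee_fin sqr_ge0.
have fin : area (square c h t) \is a fin_num.
  by rewrite ge0_fin_numE //; apply: le_lt_trans hi _; rewrite ltry.
exists (fine (area (square c h t))); split; first by rewrite fineK.
rewrite -lte_fin fineK //; apply: lt_le_trans _ lo.
by rewrite lte_fin exprn_gt0 // mulr_gt0 // divr_gt0.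
Qed.

Theorem lemma3p2 (R : realType) (c : R * R) (h t : R) (hpos : 0 < h) :
  ((15%:R^-1)%:E <=
   area (square c h t `&` [set p | ((15%:R^-1)%:E <= fratio c h t p)%E])
     * (area (square c h t))^-1)%E.
Proof.
have [a [Ea a0]] := @areaC_pos R c h t hpos.
pose s : R := 4 / 15.
have s0 : 0 < s by rewrite /s divr_gt0.
have s15 : 15%:R^-1 <= s ^+ 2 :> R by rewrite /s; lra.
have inv : ((area (square c h t))^-1 = (a^-1)%:E)%E by rewrite Ea inver gt_eqF.
have aS : forall v, area (square v (s * h) t) = ((s ^+ 2 * a)%:E)%E.
  by move=> v; rewrite (@area_sq_hom R s v c h t s0) Ea -EFinM.
have key : ((s ^+ 2 * a)%:E * (a^-1)%:E = (s ^+ 2)%:E :> \bar R)%E.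
  by rewrite -EFinM mulfK // gt_eqF.
have sub : square c (s * h) t `<=`
    square c h t `&` [set p | ((15%:R^-1)%:E <= fratio c h t p)%E].
  move=> p Sp; split.
    move: Sp; rewrite !squareE => -[h1 h2]; split.
      by apply: le_trans h1 _; rewrite /s; lra.
    by apply: le_trans h2 _; rewrite /s; lra.
  rewrite /= /fratio inv.
  apply: le_trans _ (lee_wpmul2r _ (@area_mono R _ _ (@D_contains R c p h t hpos Sp))).
    by rewrite aS key lee_fin.
  by rewrite lee_fin invr_ge0 ltW.
rewrite inv; apply: le_trans _ (lee_wpmul2r _ (@area_mono R _ _ sub)).
  by rewrite aS key lee_fin.
by rewrite lee_fin invr_ge0 ltW.
Qed.
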